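(* Let $\mathbf U$ be a real $3\times 3$ positive-definite symmetric matrix. Let $\hat{\mathbf e}_1\in\mathbb R^3$ with $|\hat{\mathbf e}_1|=1$, define $\hat{\mathbf U}=(-\mathbf I+2\hat{\mathbf e}_1\otimes\hat{\mathbf e}_1)\mathbf U(-\mathbf I+2\hat{\mathbf e}_1\otimes\hat{\mathbf e}_1)$ and suppose $\hat{\mathbf U}\neq\mathbf U$. Then there exists a second unit vector $\hat{\mathbf e}_2$, not parallel to $\hat{\mathbf e}_1$, satisfying $\hat{\mathbf U}=(-\mathbf I+2\hat{\mathbf e}_2\otimes\hat{\mathbf e}_2)\mathbf U(-\mathbf I+2\hat{\mathbf e}_2\otimes\hat{\mathbf e}_2)$ if and only if $\hat{\mathbf e}_1$ is perpendicular to an eigenvector of $\mathbf U$. In the case that $\hat{\mathbf e}_1$ is perpendicular to an eigenvector of $\mathbf U$, such $\hat{\mathbf e}_2$ is unique up to sign and is perpendicular to both $\hat{\mathbf e}_1$ and that eigenvector. Moreover, suppose $\hat{\mathbf e}_1$ is perpendicular to an eigenvector $\mathbf v$ of $\mathbf U$ with $|\mathbf v|=1$, and put $\hat{\mathbf e}_2=\mathbf v\times\hat{\mathbf e}_1$. Then the two solutions $\mathbf a_C^1\otimes\mathbf n_C^1$, $\mathbf a_C^2\otimes\mathbf n_C^2$ (dyads $\mathbf a\otimes\mathbf n$, together with some $\hat{\mathbf R}\in\mathrm{SO}(3)$) of the equation $\hat{\mathbf R}\hat{\mathbf U}-\mathbf U=\mathbf a\otimes\mathbf n$ can be written $$\mathbf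 n_C^1=\hat{\mathbf e}_1,\quad \mathbf a_C^1=\xi\,\mathbf U\hat{\mathbf e}_2,\quad \xi=2\frac{\hat{\mathbf e}_2\cdot\mathbf U^{-2}\hat{\mathbf e}_1}{\hat{\mathbf e}_1\cdot\mathbf U^{-2}\hat{\mathbf e}_1},$$ $$\mathbf n_C^2=\hat{\mathbf e}_2,\quad \mathbf a_C^2=\eta\,\mathbf U\hat{\mathbf e}_1,\quad \eta=-2\frac{\hat{\mathbf e}_2\cdot\mathbf U^{2}\hat{\mathbf e}_1}{\hat{\mathbf e}_1\cdot\mathbf U^{2}\hat{\mathbf e}_1}.$$
   Context: For vectors $\mathbf a,\mathbf n\in\mathbb R^3$, $\mathbf a\otimes\mathbf n$ denotes the $3\times3$ matrix with $(\mathbf a\otimes\mathbf n)\mathbf x=(\mathbf n\cdot\mathbf x)\mathbf a$. $\mathrm{SO}(3)$ is the group of rotations. Solutions of $\hat{\mathbf R}\hat{\mathbf U}-\mathbf U=\mathbf a\otimes\mathbf n$ are counted as distinct only via the dyad $\mathbf a\otimes\mathbf n$ (rescaling $\mathbf a\to\rho\mathbf a$, $\mathbf n\to\mathbf n/\rho$ does not give a new solution). *)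

(* Defs.v *)
From HB Require Import structures.
From mathcomp Require Import all_boot all_order all_algebra.
From mathcomp Require Import reals.
Set Implicit Arguments. Unset Strict Implicit. Unset Printing Implicit Defensive.
Import Order.TTheory GRing.Theory Num.Theory.
Local Open Scope ring_scope.

Definition dot (R : realType) (u v : 'cV[R]_3) : R := (u^T *m v) 0 0.

Definition dyad (R : realType) (a n : 'cV[R]_3) : 'M[R]_3 := a *m n^T.

Definition cross (R : realType) (u v : 'cV[R]_3) : 'cV[R]_3 :=
  \col_(i < 3)
    [:: u 1 0 * v 2 0 - u 2 0 * v 1 0;
        u 2 0 * v 0 0 - u 0 0 * v 2 0;
        u 0 0 * v 1 0 - u 1 0 * v 0 0]`_i.

Definition unit_vec (R : realType) (e : 'cV[R]_3) : Prop := dot e e = 1.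

Definition parallel (R : realType) (u v : 'cV[R]_3) : Prop :=
  exists c : R, u = c *: v.

Definition Qrot (R : realType) (e : 'cV[R]_3) : 'M[R]_3 :=
  - (1%:M) + 2 *: dyad e e.

Definition twinU (R : realType) (e : 'cV[R]_3) (U : 'M[R]_3) : 'M[R]_3 :=
  Qrot e *m U *m Qrot e.

Definition sym_mx (R : realType) (U : 'M[R]_3) : Prop := U^T = U.

Definition posdef (R : realType) (U : 'M[R]_3) : Prop :=
  forall x : 'cV[R]_3, x != 0 -> 0 < dot x (U *m x).

Definition eigenvector (R : realType) (U : 'M[R]_3) (v : 'cV[R]_3) : Prop :=
  v != 0 /\ exists lam : R, U *m v = lam *: v.

Definition SO3 (R : realType) (Q : 'M[R]_3) : Prop :=
  Q^T *m Q = 1%:M /\ \det Q = 1.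

Definition twin_solution (R : realType) (U Uh D : 'M[R]_3) : Prop :=
  exists (Rh : 'M[R]_3) (a n : 'cV[R]_3),
    SO3 Rh /\ D = dyad a n /\ Rh *m Uh - U = D.

(* Main.v *)
Require Import Defs.
From HB Require Import structures.
From mathcomp Require Import all_boot all_order all_algebra.
From mathcomp Require Import reals.
From mathcomp Require Import ring lra.
Import Order.TTheory GRing.Theory Num.Theory.
Local Open Scope ring_scope.

Section Basics.
Context {R : realType}.
Implicit Types u v w x y a b n e g : 'cV[R]_3.

Lemma sum3 (F : 'I_3 -> R) : \sum_(i < 3) F i = F 0 + F 1 + F 2.
Proof.
rewrite !big_ord_recr big_ord0 /= add0r.
by congr (F _ + F _ + F _); apply/val_inj.
Qed.

Lemma cV3_eq x y : x 0 0 = y 0 0 -> x 1 0 = y 1 0 -> x 2 0 = y 2 0 -> x = y.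
Proof.
move=> h0 h1 h2; apply/matrixP => i j; rewrite ord1.
case: i => -[|[|[|//]]] Hi.
- by rewrite (_ : Ordinal Hi = 0) //; apply/val_inj.
- by rewrite (_ : Ordinal Hi = 1) //; apply/val_inj.
- by rewrite (_ : Ordinal Hi = 2) //; apply/val_inj.
Qed.

Lemma dotE u v : dot u v = u 0 0 * v 0 0 + u 1 0 * v 1 0 + u 2 0 * v 2 0.
Proof. by rewrite /dot mxE sum3 !mxE. Qed.

Lemma crossE u v : (cross u v) 0 0 = u 1 0 * v 2 0 - u 2 0 * v 1 0 /\
  (cross u v) 1 0 = u 2 0 * v 0 0 - u 0 0 * v 2 0 /\
  (cross u v) 2 0 = u 0 0 * v 1 0 - u 1 0 * v 0 0.
Proof. by rewrite !mxE. Qed.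


Ltac vring := apply: cV3_eq; rewrite ?dotE !mxE /=; ring.
Ltac sring := rewrite ?dotE ?mxE /=; ring.

Lemma dotC u v : dot u v = dot v u. Proof. sring. Qed.
Lemma dotDl u v w : dot (u + v) w = dot u w + dot v w. Proof. rewrite !dotE !mxE; ring. Qed.
Lemma dotDr u v w : dot w (u + v) = dot w u + dot w v. Proof. rewrite !dotE !mxE; ring. Qed.
Lemma dotZl k u v : dot (k *: u) v = k * dot u v. Proof. rewrite !dotE !mxE; ring. Qed.
Lemma dotZr k u v : dot u (k *: v) = k * dot u v. Proof. rewrite !dotE !mxE; ring. Qed.
Lemma dotNl u v : dot (- u) v = - dot u v. Proof. rewrite !dotE !mxE; ring. Qed.
Lemma dotNr u v : dot u (- v) = - dot u v. Proof. rewrite !dotE !mxE; ring. Qed.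
Lemma dotBl u v w : dot (u - v) w = dot u w - dot v w. Proof. rewrite !dotE !mxE; ring. Qed.
Lemma dotBr u v w : dot w (u - v) = dot w u - dot w v. Proof. rewrite !dotE !mxE; ring. Qed.
Lemma dot0l u : dot 0 u = 0. Proof. rewrite !dotE !mxE; ring. Qed.
Lemma dot0r u : dot u 0 = 0. Proof. rewrite !dotE !mxE; ring. Qed.

Definition dotL := (dotDl, dotDr, dotZl, dotZr, dotNl, dotNr, dotBl, dotBr, dot0l, dot0r).

Lemma dot_mul u (M : 'M[R]_3) v : dot u (M *m v) = dot (M^T *m u) v.
Proof. by rewrite /dot trmx_mul trmxK mulmxA. Qed.

Lemma dot_ge0 u : 0 <= dot u u.
Proof. rewrite dotE; nra. Qed.

Lemma dot_eq0 u : dot u u = 0 -> u = 0.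
Proof.
rewrite dotE => h.
have h0 : u 0 0 = 0 by nra.
have h1 : u 1 0 = 0 by nra.
have h2 : u 2 0 = 0 by nra.
by apply: cV3_eq; rewrite mxE.
Qed.

Lemma dyad_mul a n x : dyad a n *m x = dot n x *: a.
Proof.
rewrite /dyad -mulmxA [n^T *m x]mx11_scalar -/(dot n x).
by rewrite mul_mx_scalar.
Qed.

Lemma dyadZl k a n : dyad (k *: a) n = k *: dyad a n.
Proof. by rewrite /dyad scalemxAl. Qed.
Lemma dyadZr k a n : dyad a (k *: n) = k *: dyad a n.
Proof. by rewrite /dyad linearZ /= scalemxAr. Qed.

Lemma Qmul e x : Qrot e *m x = (2 * dot e x) *: e - x.
Proof.
rewrite /Qrot mulmxDl mulNmx mul1mx -scalemxAl dyad_mul scalerA addrC.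
by [].
Qed.

Lemma mx_ext (M N : 'M[R]_3) : (forall x, M *m x = N *m x) -> M = N.
Proof.
move=> h; apply/matrixP => i j.
have := congr1 (fun v : 'cV[R]_3 => v i 0) (h (delta_mx j 0)).
by rewrite -!colE !mxE.
Qed.

Lemma QQ e : unit_vec e -> Qrot e *m Qrot e = 1%:M.
Proof.
move=> he; apply: mx_ext => x.
rewrite -mulmxA !Qmul mul1mx !dotL he; vring.
Qed.

Lemma Qtr e : (Qrot e)^T = Qrot e.
Proof. by rewrite /Qrot /dyad linearD linearN linearZ /= trmx1 trmx_mul trmxK. Qed.

Lemma det3 (A : 'M[R]_3) : \det A =
  A 0 0 * (A 1 1 * A 2 2 - A 1 2 * A 2 1)
  - A 0 1 * (A 1 0 * A 2 2 - A 1 2 * A 2 0)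
  + A 0 2 * (A 1 0 * A 2 1 - A 1 1 * A 2 0).
Proof.
rewrite (expand_det_row _ 0) sum3 /cofactor.
rewrite !(expand_det_row _ 0) !big_ord_recr big_ord0 /= /cofactor.
rewrite !det_mx11 !big_ord0 !mxE /=.
pose f := fun (n m : nat) => A (inord n) (inord m).
have key : forall i j : 'I_3, A i j = f i j by move=> i j; rewrite /f !inord_val.
rewrite !key /= /f; ring.
Qed.

Lemma det_dyad1 g n : \det (1%:M + dyad g n) = 1 + dot n g.
Proof.
rewrite det3 /dyad !mxE !big_ord1 !mxE dotE /=.
ring.
Qed.

Lemma cross_dotl a b : dot (cross a b) a = 0. Proof. sring. Qed.
Lemma cross_dotr a b : dot (cross a b) b = 0. Proof. sring. Qed.
Lemma lagrange a b : dot (cross a b) (cross a b) = dot a a * dot b b - dot a b ^+ 2.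
Proof. sring. Qed.
Lemma bac_cab a b c : cross a (cross b c) = dot a c *: b - dot a b *: c.
Proof. vring. Qed.

Lemma frame_gen a b x : dot (cross a b) (cross a b) *: x =
  dot (cross a b) x *: cross a b + dot a x *: (dot b b *: a - dot a b *: b)
  + dot b x *: (dot a a *: b - dot a b *: a).
Proof. vring. Qed.

Lemma frame a b x : unit_vec a -> unit_vec b -> dot a b = 0 ->
  x = dot a x *: a + dot b x *: b + dot (cross a b) x *: cross a b.
Proof.
move=> ha hb hab; have := frame_gen a b x.
rewrite lagrange ha hb hab => H.
have E : (1 * 1 - 0 ^+ 2 : R) = 1 by ring.
rewrite E scale1r in H; rewrite {1}H; vring.
Qed.

Lemma vcomp x y : x = y -> x 0 0 = y 0 0 /\ x 1 0 = y 1 0 /\ x 2 0 = y 2 0.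
Proof. by move=> ->. Qed.

Lemma frame_vec a b x y : unit_vec a -> unit_vec b -> dot a b = 0 ->
  dot a x = dot a y -> dot b x = dot b y -> dot (cross a b) x = dot (cross a b) y -> x = y.
Proof.
move=> ha hb hab h1 h2 h3.
by rewrite (frame _ _ x ha hb hab) (frame _ _ y ha hb hab) h1 h2 h3.
Qed.

Lemma frame_mx a b (M N : 'M[R]_3) : unit_vec a -> unit_vec b -> dot a b = 0 ->
  M *m a = N *m a -> M *m b = N *m b -> M *m cross a b = N *m cross a b -> M = N.
Proof.
move=> ha hb hab h1 h2 h3; apply: mx_ext => x.
rewrite (frame _ _ x ha hb hab) !mulmxDr -!scalemxAr h1 h2 h3.
by [].
Qed.

Lemma frame_ww a b : unit_vec a -> unit_vec b -> dot a b = 0 ->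
  dot (cross a b) (cross a b) = 1.
Proof. move=> ha hb hab; rewrite lagrange ha hb hab; ring. Qed.

Lemma Q12 a b y : unit_vec a -> unit_vec b -> dot a b = 0 ->
  Qrot a *m (Qrot b *m y) = (2 * dot (cross a b) y) *: cross a b - y.
Proof.
move=> ha hb hab.
rewrite !Qmul !dotL hab.
have Hy := frame _ _ y ha hb hab.
set y1 := dot a y in Hy *.
set y2 := dot b y in Hy *.
set y3 := dot (cross a b) y in Hy *.
rewrite {-1}Hy.
rewrite {1}Hy.
vring.
Qed.

Lemma Qdiff a b y : unit_vec a -> unit_vec b ->
  Qrot a *m (Qrot b *m y) - Qrot b *m (Qrot a *m y) =
  (4 * dot a b) *: (dot b y *: a - dot a y *: b).
Proof.
move=> ha hb; rewrite !Qmul !dotL ?ha ?hb (dotC b a); vring.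
Qed.

End Basics.

Ltac vring := apply: cV3_eq; rewrite ?dotE !mxE /=; ring.
Ltac sring := rewrite ?dotE ?mxE /=; ring.


Lemma case_split {R : realType} (n1 n2 n3 b1 b2 b3 s q : R) : q != 0 ->
  2 * n1 * b1 + s * n1 * n1 = 0 -> 2 * n2 * b2 + s * n2 * n2 = 0 ->
  n2 * b1 + n1 * b2 + s * n1 * n2 = - 2 * q ->
  n3 * b1 + n1 * b3 + s * n1 * n3 = 0 ->
  n3 * b2 + n2 * b3 + s * n2 * n3 = 0 ->
  (n2 = 0 /\ n3 = 0 /\ n1 * b2 = - 2 * q /\ b3 = 0) \/
  (n1 = 0 /\ n3 = 0 /\ n2 * b1 = - 2 * q /\ b3 = 0).
Proof.
move=> hq e11 e22 e12 e13 e23.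
have hq2 : - 2 * q != 0 by rewrite mulf_neq0 // oppr_eq0 pnatr_eq0.
have [h1|h1] := eqVneq n1 0.
- subst n1; right.
  have e12' : n2 * b1 = - 2 * q by move: e12; rewrite !(mul0r, mulr0, addr0, add0r).
  have hn2 : n2 != 0 by apply: contraNneq hq2 => h; rewrite -e12' h mul0r.
  have hb1 : b1 != 0 by apply: contraNneq hq2 => h; rewrite -e12' h mulr0.
  have hn3 : n3 = 0.
    have : n3 * b1 = 0 by move: e13; rewrite !(mul0r, mulr0, addr0, add0r).
    by move/eqP; rewrite mulf_eq0 (negbTE hb1) orbF => /eqP.
  subst n3; split => //; split => //; split => //.
  have : n2 * b3 = 0 by move: e23; rewrite !(mul0r, mulr0, addr0, add0r).
  by move/eqP; rewrite mulf_eq0 (negbTE hn2) /= => /eqP.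
- left.
  have hm1 : 2 * b1 = - s * n1.
    have : n1 * (2 * b1 + s * n1) = 0 by rewrite -e11; ring.
    by move/eqP; rewrite mulf_eq0 (negbTE h1) /= addr_eq0 => /eqP ->; ring.
  have hm2 : n1 * (2 * b2 + s * n2) = - 4 * q.
    have -> : n1 * (2 * b2 + s * n2) =
      2 * (n2 * b1 + n1 * b2 + s * n1 * n2) - n2 * (2 * b1 + s * n1) by ring.
    rewrite e12 hm1; ring.
  have hm2' : 2 * b2 + s * n2 != 0.
    apply/eqP => h; move: hm2; rewrite h mulr0 => /eqP; rewrite eq_sym mulf_eq0.
    by rewrite oppr_eq0 pnatr_eq0 /= (negbTE hq).
  have hn2 : n2 = 0.
    have : n2 * (2 * b2 + s * n2) = 0 by rewrite -e22; ring.
    by move/eqP; rewrite mulf_eq0 (negbTE hm2') orbF => /eqP.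
  subst n2.
  have hb2 : n1 * b2 = - 2 * q.
    have h2 : (2 : R) != 0 by rewrite pnatr_eq0.
    apply: (mulfI h2) => /=.
    have -> : 2 * (n1 * b2) = n1 * (2 * b2 + s * 0) by ring.
    rewrite hm2; ring.
  have hb2' : b2 != 0 by apply: contraNneq hq2 => h; rewrite -hb2 h mulr0.
  have hn3 : n3 = 0.
    have : n3 * b2 = 0 by move: e23; rewrite !(mul0r, mulr0, addr0, add0r).
    by move/eqP; rewrite mulf_eq0 (negbTE hb2') orbF => /eqP.
  subst n3; split => //; split => //; split => //.
  have : n1 * b3 = 0 by move: e13; rewrite !(mul0r, mulr0, addr0, add0r).
  by move/eqP; rewrite mulf_eq0 (negbTE h1) /= => /eqP.
Qed.

Section Main.
Variable R : realType.
Variable U : 'M[R]_3.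
Hypothesis Hsym : U^T = U.
Hypothesis Hpd : posdef U.
Variable e1 : 'cV[R]_3.
Hypothesis He1 : unit_vec e1.
Hypothesis Hne : twinU e1 U <> U.
Implicit Types u v w x y a b n e g : 'cV[R]_3.

Lemma Usym x y : dot x (U *m y) = dot (U *m x) y.
Proof. by rewrite dot_mul Hsym. Qed.

Lemma twin_eig A : U *m e1 = A *: e1 -> twinU e1 U = U.
Proof.
move=> hU; apply: mx_ext => x.
rewrite /twinU -!mulmxA !Qmul mulmxBr -scalemxAr hU !dotL Usym hU !dotL He1.
apply: cV3_eq; rewrite !mxE; ring.
Qed.

Lemma noeig A : U *m e1 <> A *: e1.
Proof. by move/twin_eig. Qed.

Lemma comm e2 : unit_vec e2 -> twinU e2 U = twinU e1 U ->
  forall x, Qrot e1 *m (Qrot e2 *m (U *m x)) = U *m (Qrot e1 *m (Qrot e2 *m x)) /\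
            Qrot e2 *m (Qrot e1 *m (U *m x)) = U *m (Qrot e2 *m (Qrot e1 *m x)).
Proof.
move=> he2; rewrite /twinU => ht.
have h1 : Qrot e1 *m Qrot e2 *m U = U *m Qrot e1 *m Qrot e2.
  have -> : Qrot e1 *m Qrot e2 *m U = Qrot e1 *m (Qrot e2 *m U *m Qrot e2) *m Qrot e2.
    by rewrite !mulmxA -(mulmxA _ (Qrot e2) (Qrot e2)) QQ // mulmx1.
  by rewrite ht !mulmxA QQ // mul1mx.
have h2 : Qrot e2 *m Qrot e1 *m U = U *m Qrot e2 *m Qrot e1.
  have -> : Qrot e2 *m Qrot e1 *m U = Qrot e2 *m (Qrot e1 *m U *m Qrot e1) *m Qrot e1.
    by rewrite !mulmxA -(mulmxA _ (Qrot e1) (Qrot e1)) QQ // mulmx1.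
  by rewrite -ht !mulmxA QQ // mul1mx.
move=> x; split.
  by rewrite !mulmxA h1 -!mulmxA.
by rewrite !mulmxA h2 -!mulmxA.
Qed.


Lemma orth e2 : unit_vec e2 -> ~ parallel e2 e1 -> twinU e2 U = twinU e1 U ->
  dot e1 e2 = 0.
Proof.
move=> he2 hnp ht.
set c := dot e1 e2.
have hc2 : 1 - c ^+ 2 != 0.
  apply/eqP => h; apply: hnp; exists c.
  apply/eqP; rewrite -subr_eq0; apply/eqP; apply: dot_eq0.
  rewrite !dotL He1 he2 (dotC e2 e1) -/c.
  apply: (etrans _ h); ring.
apply/eqP; apply: contraT => hc.
have K : forall x, dot e2 (U *m x) *: e1 - dot e1 (U *m x) *: e2 =
   dot e2 x *: (U *m e1) - dot e1 x *: (U *m e2).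
  move=> x; have [h1 h2] := comm e2 he2 ht x.
  have := Qdiff e1 e2 (U *m x) He1 he2.
  rewrite h1 h2 -mulmxBr Qdiff // -scalemxAr mulmxBr -!scalemxAr.
  move/(scalemx_inj _)=> -> //.
  by rewrite mulf_neq0 // pnatr_eq0.
have ha := K e1; have hb := K e2.
rewrite He1 he2 (dotC e2 e1) -/c in ha hb.
have hB : dot e1 (U *m e2) = dot e2 (U *m e1) by rewrite Usym dotC.
have da := congr1 (dot e1) ha.
have db := congr1 (dot e2) hb.
rewrite !dotL ?He1 ?he2 ?hB ?(dotC e2 e1) -?/c in da db.
set A := dot e1 (U *m e1) in da ha.
set B := dot e2 (U *m e1) in da db ha hb.
set C := dot e2 (U *m e2) in db hb.
rewrite hB -/B in ha hb.
have eB : B = c * A by lra.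
have eC : C = A.
  have : c * (C - A) = 0 by lra.
  by move/eqP; rewrite mulf_eq0 (negbTE hc) /= subr_eq0 => /eqP.
have : U *m e1 = A *: e1.
  move: (vcomp _ _ ha) (vcomp _ _ hb) => [a0 [a1 a2]] [b0 [b1 b2]].
  rewrite !mxE in a0 a1 a2 b0 b1 b2.
  apply: cV3_eq; rewrite !mxE; apply: (mulfI hc2); rewrite eC eB in b0 b1 b2 a0 a1 a2; nra.
by move/noeig.
Qed.


Lemma eig_w e2 : unit_vec e2 -> dot e1 e2 = 0 -> twinU e2 U = twinU e1 U ->
  U *m cross e1 e2 = dot (cross e1 e2) (U *m cross e1 e2) *: cross e1 e2.
Proof.
move=> he2 h12 ht.
have [h1 _] := comm e2 he2 ht (cross e1 e2).
rewrite !Q12 // frame_ww // mulmxBr -scalemxAr in h1.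
have [a0 [a1 a2]] := vcomp _ _ h1.
rewrite !mxE in a0 a1 a2.
apply: cV3_eq; rewrite !mxE; lra.
Qed.

Lemma notB e2 lam : unit_vec e2 -> dot e1 e2 = 0 ->
  U *m cross e1 e2 = lam *: cross e1 e2 -> dot e1 (U *m e2) != 0.
Proof.
move=> he2 h12 hw; apply/eqP => hB.
apply: (noeig (dot e1 (U *m e1))).
rewrite {1}(frame _ _ (U *m e1) He1 he2 h12).
rewrite (Usym e2 e1) (dotC (U *m e2)) hB (Usym (cross e1 e2) e1) hw dotZl cross_dotl.
by rewrite mulr0 !scale0r !addr0.
Qed.

Lemma partA1 e2 : unit_vec e2 -> ~ parallel e2 e1 -> twinU e2 U = twinU e1 U ->
  exists v, eigenvector U v /\ dot e1 v = 0.
Proof.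
move=> he2 hnp ht.
have h12 := orth e2 he2 hnp ht.
exists (cross e1 e2); split; last by rewrite dotC cross_dotl.
split; last by eexists; exact: eig_w.
apply/eqP => h0.
have := frame_ww _ _ He1 he2 h12.
by rewrite h0 dot0l => /eqP; rewrite eq_sym oner_eq0.
Qed.

Lemma partB_aux v e2 : eigenvector U v -> dot e1 v = 0 ->
  unit_vec e2 -> ~ parallel e2 e1 -> twinU e2 U = twinU e1 U ->
  dot e2 e1 = 0 /\ dot e2 v = 0.
Proof.
move=> [hv0 [mu hv]] h1v he2 hnp ht.
have h12 := orth e2 he2 hnp ht.
split; first by rewrite dotC.
have hw := eig_w e2 he2 h12 ht.
have hB := notB e2 _ he2 h12 hw.
have : dot e1 (U *m v) = 0 by rewrite hv dotZr h1v mulr0.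
rewrite {1}(frame _ _ v He1 he2 h12) !mulmxDr -!scalemxAr hw !dotL h1v.
rewrite (dotC e1 (cross e1 e2)) cross_dotl !mulr0 mul0r add0r addr0.
move/eqP; rewrite mulf_eq0 (negbTE hB) orbF => /eqP.
by rewrite dotC.
Qed.

Lemma partB_uniq v e2 e2' : eigenvector U v -> dot e1 v = 0 ->
  unit_vec e2 -> ~ parallel e2 e1 -> twinU e2 U = twinU e1 U ->
  unit_vec e2' -> ~ parallel e2' e1 -> twinU e2' U = twinU e1 U ->
  e2' = e2 \/ e2' = - e2.
Proof.
move=> hv h1v he2 hnp ht he2' hnp' ht'.
have [h21 h2v] := partB_aux v e2 hv h1v he2 hnp ht.
have [h21' h2v'] := partB_aux v e2' hv h1v he2' hnp' ht'.
have h12 : dot e1 e2 = 0 by rewrite dotC.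
have Hv := frame _ _ v He1 he2 h12.
rewrite h1v h2v !scale0r !add0r in Hv.
have ht0 : dot (cross e1 e2) v != 0.
  apply/eqP => h0; move: hv => [/eqP []]; by rewrite Hv h0 scale0r.
have hw' : dot (cross e1 e2) e2' = 0.
  move: h2v'; rewrite Hv dotZr => /eqP; rewrite mulf_eq0 (negbTE ht0) /= dotC.
  by move/eqP.
have He := frame _ _ e2' He1 he2 h12.
rewrite hw' (dotC e1) h21' !scale0r add0r addr0 in He.
have hk : dot e2 e2' ^+ 2 = 1.
  move: he2'; rewrite /unit_vec {1 2}He dotZl dotZr he2 mulr1 => h.
  by rewrite expr2.
move: hk => /eqP; rewrite sqrf_eq1 => /orP [] /eqP hk.
  by left; rewrite He hk scale1r.
by right; rewrite He hk scaleN1r.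
Qed.


Lemma dot_gt0 x : x != 0 -> 0 < dot x x.
Proof.
move=> hx; rewrite lt_def dot_ge0 andbT; apply/eqP => h.
by move/eqP: hx; apply; apply: dot_eq0.
Qed.

Lemma comm_twin e2 : unit_vec e2 ->
  Qrot e1 *m Qrot e2 *m U = U *m Qrot e1 *m Qrot e2 -> twinU e2 U = twinU e1 U.
Proof.
move=> he2 h; rewrite /twinU.
have -> : Qrot e2 *m U *m Qrot e2 = Qrot e1 *m (Qrot e1 *m Qrot e2 *m U) *m Qrot e2.
  by rewrite !mulmxA QQ // mul1mx.
by rewrite h !mulmxA -(mulmxA _ (Qrot e2) (Qrot e2)) QQ // mulmx1.
Qed.

Lemma partA2 v : eigenvector U v -> dot e1 v = 0 ->
  exists e2, [/\ unit_vec e2, ~ parallel e2 e1 & twinU e2 U = twinU e1 U].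
Proof.
move=> [hv0 [mu hv]] h1v.
have hd := dot_gt0 _ hv0.
set k := (Num.sqrt (dot v v))^-1.
set vn := k *: v.
have hvn : unit_vec vn.
  rewrite /unit_vec /vn dotZl dotZr mulrA -expr2 /k exprVn sqr_sqrtr ?ltW //.
  by rewrite mulVf // gt_eqF.
have h1vn : dot e1 vn = 0 by rewrite /vn dotZr h1v mulr0.
have hUvn : U *m vn = mu *: vn by rewrite /vn -scalemxAr hv !scalerA mulrC.
exists (cross vn e1).
have he2 : unit_vec (cross vn e1).
  by rewrite /unit_vec lagrange hvn He1 dotC h1vn; ring.
have h12 : dot e1 (cross vn e1) = 0 by rewrite dotC cross_dotr.
have hw : cross e1 (cross vn e1) = vn by rewrite bac_cab He1 h1vn scale1r scale0r subr0.
split => //.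
  move=> [t ht].
  have : dot e1 (cross vn e1) = t by rewrite ht dotZr He1 mulr1.
  rewrite h12 => t0; move: he2; rewrite /unit_vec ht -t0 scale0r dot0l.
  by move/eqP; rewrite eq_sym oner_eq0.
apply: comm_twin => //.
apply: mx_ext => x.
rewrite -!mulmxA !Q12 // hw mulmxBr -scalemxAr hUvn Usym hUvn dotZl.
by rewrite [in RHS]scalerA -mulrA [dot vn x * mu]mulrC.
Qed.


Lemma Uunit : U \in unitmx.
Proof.
rewrite unitmxE unitfE; apply/negP => /det0P [z hz0 hz].
have hx : z^T != 0 by apply: contra hz0 => /eqP h; rewrite -[z]trmxK h linear0.
have := Hpd _ hx.
have -> : U *m z^T = 0 by rewrite -Hsym -trmx_mul hz linear0.
by rewrite dot0r ltxx.
Qed.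

Lemma detU0 : \det U != 0.
Proof. by have := Uunit; rewrite unitmxE unitfE. Qed.

Lemma Uh_mul x : twinU e1 U *m x = Qrot e1 *m (U *m (Qrot e1 *m x)).
Proof. by rewrite /twinU -!mulmxA. Qed.

Lemma Uh_sym : (twinU e1 U)^T = twinU e1 U.
Proof. by rewrite /twinU !trmx_mul Qtr Hsym mulmxA. Qed.

Lemma det_Uh : \det (twinU e1 U) = \det U.
Proof.
rewrite /twinU !det_mulmx mulrC mulrA -det_mulmx QQ // det1 mul1r.
by [].
Qed.

Lemma Uh_unit : twinU e1 U \in unitmx.
Proof. by rewrite unitmxE det_Uh unitfE detU0. Qed.

Lemma MtM a n x : ((U + dyad a n)^T *m (U + dyad a n)) *m x =
  U *m (U *m x) + dot n x *: (U *m a) + dot (U *m a) x *: n + (dot n x * dot a a) *: n.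
Proof.
have -> : (U + dyad a n)^T = U + dyad n a.
  by rewrite linearD /= Hsym /dyad trmx_mul trmxK.
rewrite -mulmxA !mulmxDl !mulmxDr.
rewrite (dyad_mul a n x) (dyad_mul n a) (dyad_mul n a) !dotL (Usym a x).
rewrite -scalemxAr; apply: cV3_eq; rewrite !mxE; ring.
Qed.

Lemma det_pert a n : \det (U + dyad a n) = \det U * (1 + dot n (invmx U *m a)).
Proof.
have -> : U + dyad a n = U *m (1%:M + dyad (invmx U *m a) n).
  by rewrite mulmxDr mulmx1 /dyad mulmxA mulKVmx // Uunit.
by rewrite det_mulmx det_dyad1.
Qed.

Lemma sol_of a n : (U + dyad a n)^T *m (U + dyad a n) = twinU e1 U *m twinU e1 U ->
  dot n (invmx U *m a) = 0 -> twin_solution U (twinU e1 U) (dyad a n).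
Proof.
move=> hM hd0.
have hU := Uh_unit.
exists ((U + dyad a n) *m invmx (twinU e1 U)), a, n; split; [split|split] => //.
- rewrite trmx_mul trmx_inv Uh_sym.
  have -> : forall X Y Z W : 'M[R]_3, X *m Y *m (Z *m W) = X *m (Y *m Z) *m W.
    by move=> *; rewrite !mulmxA.
  by rewrite hM (mulmxA (invmx (twinU e1 U))) mulVmx // mul1mx mulmxV.
- rewrite det_mulmx det_pert hd0 addr0 mulr1 det_inv det_Uh mulfV //.
  exact: detU0.
- by rewrite mulmxKV // addrC addKr.
Qed.

Section PartC.
Variable v : 'cV[R]_3.
Variable lam : R.
Hypothesis hUv : U *m v = lam *: v.
Hypothesis hv : unit_vec v.
Hypothesis h1v : dot e1 v = 0.

Local Notation e2 := (cross v e1).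

Lemma hvv : dot v v = 1. Proof. exact: hv. Qed.
Lemma h11 : dot e1 e1 = 1. Proof. exact: He1. Qed.
Lemma hv1 : dot v e1 = 0. Proof. by rewrite dotC. Qed.
Lemma h21 : dot e2 e1 = 0. Proof. exact: cross_dotr. Qed.
Lemma h12 : dot e1 e2 = 0. Proof. by rewrite dotC h21. Qed.
Lemma hv2 : dot e2 v = 0. Proof. exact: cross_dotl. Qed.
Lemma h2v : dot v e2 = 0. Proof. by rewrite dotC hv2. Qed.
Lemma h22 : dot e2 e2 = 1.
Proof. by rewrite lagrange hvv h11 hv1; ring. Qed.
Lemma he2 : unit_vec e2. Proof. exact: h22. Qed.
Lemma hw : cross e1 e2 = v.
Proof. by rewrite bac_cab h11 h1v scale1r scale0r subr0. Qed.

Lemma fdec x : x = dot e1 x *: e1 + dot e2 x *: e2 + dot v x *: v.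
Proof. by rewrite {1}(frame _ _ x He1 he2 h12) hw. Qed.

Lemma fvec x y : dot e1 x = dot e1 y -> dot e2 x = dot e2 y -> dot v x = dot v y -> x = y.
Proof. by move=> a b c; rewrite (fdec x) (fdec y) a b c. Qed.

Lemma fmx (M N : 'M[R]_3) : M *m e1 = N *m e1 -> M *m e2 = N *m e2 -> M *m v = N *m v -> M = N.
Proof. by move=> a b c; apply: (frame_mx _ _ _ _ He1 he2 h12) => //; rewrite hw. Qed.

Definition A := dot e1 (U *m e1).
Definition B := dot e2 (U *m e1).
Definition E := dot e2 (U *m e2).

Lemma hvU1 : dot v (U *m e1) = 0.
Proof. by rewrite Usym hUv dotZl hv1 mulr0. Qed.
Lemma hvU2 : dot v (U *m e2) = 0.
Proof. by rewrite Usym hUv dotZl h2v mulr0. Qed.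
Lemma h1U2 : dot e1 (U *m e2) = B.
Proof. by rewrite Usym dotC. Qed.

Lemma hUe1 : U *m e1 = A *: e1 + B *: e2.
Proof. by rewrite {1}(fdec (U *m e1)) hvU1 scale0r addr0. Qed.
Lemma hUe2 : U *m e2 = B *: e1 + E *: e2.
Proof. by rewrite {1}(fdec (U *m e2)) hvU2 h1U2 scale0r addr0. Qed.

Lemma hA : 0 < A.
Proof. rewrite /A; apply: Hpd; apply/eqP => h; move: He1; rewrite /unit_vec h dot0l => /eqP; by rewrite eq_sym oner_eq0. Qed.
Lemma hE : 0 < E.
Proof. rewrite /E; apply: Hpd; apply/eqP => h; move: h22; rewrite h dot0l => /eqP; by rewrite eq_sym oner_eq0. Qed.
Lemma hlam : 0 < lam.
Proof.
have : 0 < dot v (U *m v).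
  apply: Hpd; apply/eqP => h; move: hvv; rewrite h dot0l => /eqP; by rewrite eq_sym oner_eq0.
by rewrite hUv dotZr hvv mulr1.
Qed.

Lemma hdet2 : 0 < A * E - B ^+ 2.
Proof.
set x := E *: e1 - B *: e2.
have hx : x != 0.
  apply/eqP => h; have := congr1 (dot e1) h.
  rewrite /x !dotL h11 h12 mulr1 mulr0 subr0 => h'.
  by move: hE; rewrite h' ltxx.
have := Hpd _ hx.
rewrite /x mulmxBr -!scalemxAr hUe1 hUe2 !dotL h11 h12 h21 h22.
move: hE => hE h.
by rewrite -(pmulr_rgt0 _ hE); nra.
Qed.

Lemma hB : B != 0.
Proof.
have := notB e2 lam he2 h12; rewrite hw h1U2; apply; exact: hUv.
Qed.


Definition p := A ^+ 2 + B ^+ 2.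
Definition q := B * (A + E).
Definition r := B ^+ 2 + E ^+ 2.

Lemma hCe1 : U *m (U *m e1) = p *: e1 + q *: e2.
Proof. rewrite hUe1 mulmxDr -!scalemxAr hUe1 hUe2 /p /q; vring. Qed.
Lemma hCe2 : U *m (U *m e2) = q *: e1 + r *: e2.
Proof. rewrite hUe2 mulmxDr -!scalemxAr hUe1 hUe2 /q /r; vring. Qed.
Lemma hCv : U *m (U *m v) = (lam ^+ 2) *: v.
Proof. by rewrite hUv -scalemxAr hUv scalerA expr2. Qed.

Lemma hq : q != 0.
Proof. by rewrite /q mulf_neq0 ?hB // gt_eqF // addr_gt0 ?hA ?hE. Qed.
Lemma hp : 0 < p.
Proof. rewrite /p; have := hA; have := hB; nra. Qed.
Lemma hr : 0 < r.
Proof. rewrite /r; have := hE; have := hB; nra. Qed.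
Lemma hd : p * r - q ^+ 2 != 0.
Proof.
have -> : p * r - q ^+ 2 = (A * E - B ^+ 2) ^+ 2 by rewrite /p /q /r; ring.
by rewrite sqrf_eq0 gt_eqF // hdet2.
Qed.

Lemma Cunit : U *m U \in unitmx.
Proof. by rewrite unitmx_mul Uunit. Qed.

Lemma invC_e1 : invmx (U *m U) *m e1 =
  (r / (p * r - q ^+ 2)) *: e1 - (q / (p * r - q ^+ 2)) *: e2.
Proof.
pose y : 'cV[R]_3 := (r / (p * r - q ^+ 2)) *: e1 - (q / (p * r - q ^+ 2)) *: e2.
have hy : (U *m U) *m y = e1.
  rewrite -mulmxA /y !mulmxBr -!scalemxAr hCe1 hCe2.
  apply: cV3_eq; rewrite !mxE /=; field; exact: hd.
rewrite -/y.
by rewrite -{1}hy mulKmx // Cunit.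
Qed.


Lemma xi_val : 2 * (dot e2 (invmx (U *m U) *m e1) / dot e1 (invmx (U *m U) *m e1)) = - 2 * q / r.
Proof.
rewrite invC_e1 !dotL h11 h12 h21 h22.
have := hd; have := gt_eqF hr => hr' hd'.
field; rewrite hr' hd' //.
Qed.

Lemma eta_val : - 2 * (dot e2 ((U *m U) *m e1) / dot e1 ((U *m U) *m e1)) = - 2 * q / p.
Proof.
rewrite -mulmxA hCe1 !dotL h11 h12 h21 h22.
have := gt_eqF hp => hp'.
field; rewrite hp' //.
Qed.

Lemma Q1e1 : Qrot e1 *m e1 = e1.
Proof. rewrite Qmul h11; vring. Qed.
Lemma Q1e2 : Qrot e1 *m e2 = - e2.
Proof. rewrite Qmul h12; vring. Qed.
Lemma Q1v : Qrot e1 *m v = - v.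
Proof. rewrite Qmul h1v; vring. Qed.

Lemma Uh1 : twinU e1 U *m e1 = A *: e1 - B *: e2.
Proof. rewrite Uh_mul Q1e1 hUe1 mulmxDr -!scalemxAr Q1e1 Q1e2; vring. Qed.
Lemma Uh2 : twinU e1 U *m e2 = - B *: e1 + E *: e2.
Proof. rewrite Uh_mul Q1e2 mulmxN hUe2 mulmxN mulmxDr -!scalemxAr Q1e1 Q1e2; vring. Qed.
Lemma Uhv : twinU e1 U *m v = lam *: v.
Proof. rewrite Uh_mul Q1v mulmxN hUv mulmxN -!scalemxAr Q1v; vring. Qed.

Lemma UhUh1 : (twinU e1 U *m twinU e1 U) *m e1 = p *: e1 - q *: e2.
Proof. rewrite -mulmxA Uh1 mulmxBr -!scalemxAr Uh1 Uh2 /p /q; vring. Qed.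
Lemma UhUh2 : (twinU e1 U *m twinU e1 U) *m e2 = - q *: e1 + r *: e2.
Proof. rewrite -mulmxA Uh2 mulmxDr -!scalemxAr Uh1 Uh2 /r /q; vring. Qed.
Lemma UhUhv : (twinU e1 U *m twinU e1 U) *m v = (lam ^+ 2) *: v.
Proof. rewrite -mulmxA Uhv -!scalemxAr Uhv; vring. Qed.


Definition D1 := dyad ((- 2 * q / r) *: (U *m e2)) e1.
Definition D2 := dyad ((- 2 * q / p) *: (U *m e1)) e2.

Lemma MM1 : (U + D1)^T *m (U + D1) = twinU e1 U *m twinU e1 U.
Proof.
have hr' : B ^+ 2 + E ^+ 2 != 0 by rewrite -/r gt_eqF // hr.
apply: fmx; rewrite /D1 MtM ?UhUh1 ?UhUh2 ?UhUhv -!scalemxAr hCe2 ?hCe1 ?hCe2 ?hCv hUe2.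
all: rewrite !dotL ?h11 ?h12 ?h21 ?h22 ?h1v ?hv1 ?h2v ?hv2 ?hvv.
all: apply: cV3_eq; rewrite !mxE /= /r; field; exact: hr'.
Qed.


Lemma MM2 : (U + D2)^T *m (U + D2) = twinU e1 U *m twinU e1 U.
Proof.
have hp' : A ^+ 2 + B ^+ 2 != 0 by rewrite -/p gt_eqF // hp.
apply: fmx; rewrite /D2 MtM ?UhUh1 ?UhUh2 ?UhUhv -!scalemxAr hCe1 ?hCe1 ?hCe2 ?hCv hUe1.
all: rewrite !dotL ?h11 ?h12 ?h21 ?h22 ?h1v ?hv1 ?h2v ?hv2 ?hvv.
all: apply: cV3_eq; rewrite !mxE /= /p; field; exact: hp'.
Qed.

Lemma sol1 : twin_solution U (twinU e1 U) D1.
Proof.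
apply: sol_of; first exact: MM1.
by rewrite -scalemxAr mulKmx ?Uunit // dotZr h12 mulr0.
Qed.

Lemma sol2 : twin_solution U (twinU e1 U) D2.
Proof.
apply: sol_of; first exact: MM2.
by rewrite -scalemxAr mulKmx ?Uunit // dotZr h21 mulr0.
Qed.

Lemma D12 : D1 <> D2.
Proof.
move=> h; have := congr1 (dot e2 \o (mulmx^~ e1)) h.
rewrite /= /D1 /D2 !dyad_mul h11 h21 scale1r scale0r dot0r dotZr.
move/eqP; rewrite mulf_eq0 (gt_eqF hE) orbF !mulf_eq0 invr_eq0 (gt_eqF hr).
by rewrite orbF (negbTE hB) (gt_eqF (addr_gt0 hA hE)) oppr_eq0 pnatr_eq0.
Qed.


Lemma sol_only D : twin_solution U (twinU e1 U) D -> D = D1 \/ D = D2.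
Proof.
move=> [Rh [a [n [[hRR hdet] [hD hRe]]]]].
have hM : U + dyad a n = Rh *m twinU e1 U by rewrite -hD -hRe addrC subrK.
have hMM : (U + dyad a n)^T *m (U + dyad a n) = twinU e1 U *m twinU e1 U.
  rewrite hM trmx_mul Uh_sym.
  have -> : forall X Y Z W : 'M[R]_3, X *m Y *m (Z *m W) = X *m (Y *m Z) *m W.
    by move=> *; rewrite !mulmxA.
  by rewrite hRR mulmx1.
have hdt : dot n (invmx U *m a) = 0.
  have := congr1 determinant hM.
  rewrite det_pert det_mulmx hdet mul1r det_Uh => h.
  have := mulfI detU0 (etrans h (esym (mulr1 _))).
  by move/(congr1 (fun t => t - 1)); rewrite addrC addKr subrr.
have E1 := congr1 (mulmx^~ e1) hMM.
have E2 := congr1 (mulmx^~ e2) hMM.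
have E3 := congr1 (mulmx^~ v) hMM.
rewrite /= MtM UhUh1 hCe1 !(dotC n) !(dotC (U *m a)) in E1.
rewrite /= MtM UhUh2 hCe2 !(dotC n) !(dotC (U *m a)) in E2.
rewrite /= MtM UhUhv hCv !(dotC n) !(dotC (U *m a)) in E3.
have d11 := congr1 (dot e1) E1.
have d12 := congr1 (dot e1) E2.
have d22 := congr1 (dot e2) E2.
have d13 := congr1 (dot e1) E3.
have d23 := congr1 (dot e2) E3.
rewrite !dotL ?h11 ?h12 ?h21 ?h22 ?h1v ?hv1 ?h2v ?hv2 ?hvv in d11 d12 d22 d13 d23.
set n1 := dot e1 n in d11 d12 d22 d13 d23.
set n2 := dot e2 n in d11 d12 d22 d13 d23.
set n3 := dot v n in d11 d12 d22 d13 d23.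
set b1 := dot e1 (U *m a) in d11 d12 d22 d13 d23.
set b2 := dot e2 (U *m a) in d11 d12 d22 d13 d23.
set b3 := dot v (U *m a) in d11 d12 d22 d13 d23.
set s := dot a a in d11 d12 d22 d13 d23.
have e11 : 2 * n1 * b1 + s * n1 * n1 = 0 by lra.
have e22 : 2 * n2 * b2 + s * n2 * n2 = 0 by lra.
have e12 : n2 * b1 + n1 * b2 + s * n1 * n2 = - 2 * q by lra.
have e13 : n3 * b1 + n1 * b3 + s * n1 * n3 = 0 by lra.
have e23 : n3 * b2 + n2 * b3 + s * n2 * n3 = 0 by lra.
set g := invmx U *m a.
have ha : a = U *m g by rewrite /g mulKVmx // Uunit.
have hbg : forall f, dot f (U *m a) = dot (U *m (U *m f)) g.
  by move=> f; rewrite ha Usym Usym.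
have hgd := fdec g.
set g1 := dot e1 g in hgd.
set g2 := dot e2 g in hgd.
set g3 := dot v g in hgd.
have hb1 : b1 = p * g1 + q * g2 by rewrite /b1 hbg hCe1 !dotL.
have hb2 : b2 = q * g1 + r * g2 by rewrite /b2 hbg hCe2 !dotL.
have hb3 : b3 = lam ^+ 2 * g3 by rewrite /b3 hbg hCv !dotL.
have hl2 : lam ^+ 2 != 0 by rewrite expf_neq0 // gt_eqF // hlam.
have hr' : r != 0 by rewrite gt_eqF // hr.
have hp' : p != 0 by rewrite gt_eqF // hp.
have [[h2 [h3 [k2 k3]]] | [h1 [h3 [k1 k3]]]] := case_split n1 n2 n3 b1 b2 b3 s q hq e11 e22 e12 e13 e23.
- left.
  have hn : n = n1 *: e1.
    by rewrite {1}(fdec n) -/n1 -/n2 -/n3 h2 h3 !scale0r !addr0.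
  have hn1 : n1 != 0.
    apply/eqP => h; move/eqP: hq; apply; move: k2; rewrite h mul0r => /esym /eqP.
    by rewrite mulf_eq0 oppr_eq0 pnatr_eq0 /= => /eqP.
  have hg1 : g1 = 0.
    move: hdt; rewrite -/g hn dotZl => /eqP; rewrite mulf_eq0 (negbTE hn1) /= => /eqP.
    by [].
  have hg3 : g3 = 0.
    move: k3; rewrite hb3 => /eqP; rewrite mulf_eq0 (negbTE hl2) /= => /eqP.
    by [].
  rewrite hb2 hg1 mulr0 add0r in k2.
  rewrite hD hn ha hgd hg1 hg3 !scale0r add0r addr0 -scalemxAr dyadZl dyadZr scalerA.
  rewrite /D1 dyadZl; congr (_ *: _).
  rewrite -k2; field; exact: hr'.
- right.
  have hn : n = n2 *: e2.
    by rewrite {1}(fdec n) -/n1 -/n2 -/n3 h1 h3 !scale0r add0r addr0.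
  have hn2 : n2 != 0.
    apply/eqP => h; move/eqP: hq; apply; move: k1; rewrite h mul0r => /esym /eqP.
    by rewrite mulf_eq0 oppr_eq0 pnatr_eq0 /= => /eqP.
  have hg2 : g2 = 0.
    move: hdt; rewrite -/g hn dotZl => /eqP; rewrite mulf_eq0 (negbTE hn2) /= => /eqP.
    by [].
  have hg3 : g3 = 0.
    move: k3; rewrite hb3 => /eqP; rewrite mulf_eq0 (negbTE hl2) /= => /eqP.
    by [].
  rewrite hb1 hg2 mulr0 addr0 in k1.
  rewrite hD hn ha hgd hg2 hg3 !scale0r addr0 addr0 -scalemxAr dyadZl dyadZr scalerA.
  rewrite /D2 dyadZl; congr (_ *: _).
  rewrite -k1; field; exact: hp'.
Qed.

End PartC.

End Main.

Theorem proposition1 (R : realType) (U : 'M[R]_3) (e1 : 'cV[R]_3) :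
  sym_mx U -> posdef U -> unit_vec e1 -> twinU e1 U <> U ->
  [/\ (exists e2 : 'cV[R]_3,
         [/\ unit_vec e2, ~ parallel e2 e1 & twinU e2 U = twinU e1 U])
      <-> (exists v : 'cV[R]_3, eigenvector U v /\ dot e1 v = 0),
      (forall v : 'cV[R]_3, eigenvector U v -> dot e1 v = 0 ->
         forall e2 : 'cV[R]_3,
           unit_vec e2 -> ~ parallel e2 e1 -> twinU e2 U = twinU e1 U ->
           [/\ dot e2 e1 = 0, dot e2 v = 0 &
               forall e2' : 'cV[R]_3,
                 unit_vec e2' -> ~ parallel e2' e1 -> twinU e2' U = twinU e1 U ->
                 e2' = e2 \/ e2' = - e2])
    & (forall v : 'cV[R]_3, eigenvector U v -> unit_vec v -> dot e1 v = 0 ->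
         let e2 := cross v e1 in
         let xi := 2 * (dot e2 (invmx (U *m U) *m e1)
                        / dot e1 (invmx (U *m U) *m e1)) in
         let eta := - 2 * (dot e2 ((U *m U) *m e1) / dot e1 ((U *m U) *m e1)) in
         let D1 := dyad (xi *: (U *m e2)) e1 in
         let D2 := dyad (eta *: (U *m e1)) e2 in
         D1 <> D2 /\
         forall D : 'M[R]_3,
           twin_solution U (twinU e1 U) D <-> (D = D1 \/ D = D2))].
Proof.
move=> Hsym Hpd He1 Hne; split.
- split.
    by move=> [e2 [he2 hnp ht]]; exact: (partA1 _ _ Hsym _ He1 Hne _ he2 hnp ht).
  by move=> [v [hv h1v]]; exact: (partA2 _ _ Hsym _ He1 _ hv h1v).
- move=> v hv h1v e2 he2 hnp ht.
  have [h21 h2v] := partB_aux _ _ Hsym _ He1 Hne _ _ hv h1v he2 hnp ht.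
  split => // e2' he2' hnp' ht'.
  exact: (partB_uniq _ _ Hsym _ He1 Hne _ _ _ hv h1v he2 hnp ht he2' hnp' ht').
- move=> v [hv0 [lam hUv]] hvu h1v e2 xi eta D1' D2'.
  rewrite /D1' /D2' /xi /eta /e2.
  rewrite (xi_val _ _ Hsym Hpd _ He1 Hne _ _ hUv hvu h1v).
  rewrite (eta_val _ _ Hsym Hpd _ He1 Hne _ _ hUv hvu h1v).
  split; first exact: (D12 _ _ Hsym Hpd _ He1 Hne _ _ hUv hvu h1v).
  move=> D; split.
    exact: (sol_only _ _ Hsym Hpd _ He1 Hne _ _ hUv hvu h1v).
  case=> ->.
    exact: (sol1 _ _ Hsym Hpd _ He1 Hne _ _ hUv hvu h1v).
  exact: (sol2 _ _ Hsym Hpd _ He1 Hne _ _ hUv hvu h1v).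
Qed.
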